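(* Let $L$ be a finite simplicial complex of dimension $k$ with totally ordered vertices, let $M\in Z_k(L;\mathbb{Z}/2)$ be a $k$-cycle and $\Delta$ a $k$-simplex of $M$. Then the reduction mod 2 of the cochain $\mu$ (defined below) evaluates to $1\in\mathbb{Z}/2$ on the chain $O\Delta\times M\in C_{2k}(OL\times L;\mathbb{Z}/2)$, the sum of all cells $\sigma\times b$ with $\sigma$ a $k$-simplex of $OL$ satisfying $p(\sigma)=\Delta$ and $b$ a $k$-simplex of $M$.
   Context: For $L$ with vertex set $V=\{v_0<\dots<v_n\}$, $OL$ is the simplicial complex with vertex set $V\times\{\pm1\}$ (write $v^\pm=(v,\pm1)$) in which $\{(v_0,\varepsilon_0),\dots,(v_j,\varepsilon_j)\}$ spans a simplex iff the $v_i$ are distinct and $\{v_0,\dots,v_j\}$ is a simplex of $L$; $p:OL\to L$, $v^\pm\mapsto v$. Vertices of $OL$ are ordered $v_0^-<v_0^+<v_1^-<v_1^+<\dots<v_n^-<v_n^+$. The cochain $\mu\in C^{2k}(OL\times L;\mathbb{Z})$: for a $k$-simplex $\sigma=[x_0,\dots,x_k]$ of $OL$ and a $k$-simplex $b=[w_0,\dots,w_k]$ of $L$ (vertices in increasing order), regarding each $w_i$ as $w_i^-$, $\mu(\sigma,b)=1$ if $x_0\le w_0^-<x_1\le w_1^-<\dots<x_k\le w_k^-$ and $0$ otherwise. *)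

(* Defs.v *)
From HB Require Import structures.
From mathcomp Require Import all_boot all_order all_algebra.
Set Implicit Arguments. Unset Strict Implicit. Unset Printing Implicit Defensive.
Import GRing.Theory.

(* Vertices of L: 'I_n, totally ordered by the natural order
   (any finite totally ordered vertex set is order-isomorphic to some 'I_n).
   A simplex is a finite nonempty set of vertices. *)

Definition is_complex (V : finType) (L : {set {set V}}) : Prop :=
  (forall s, s \in L -> s != set0) /\
  (forall s t : {set V}, s \in L -> t \subset s -> t != set0 -> t \in L).

Definition has_dim (V : finType) (L : {set {set V}}) (k : nat) : Prop :=
  (forall s, s \in L -> #|s| <= k.+1) /\ (exists2 s, s \in L & #|s| = k.+1).

(* M is a set of k-simplices of L (a k-chain with Z/2 coefficients) which is
   a cycle: every (k-1)-simplex (nonempty, k >= 1) is a face of an even number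
   of simplices of M.  For k = 0 every 0-chain is a cycle (unreduced). *)
Definition is_cycle2 (V : finType) (L M : {set {set V}}) (k : nat) : Prop :=
  (forall b, b \in M -> (b \in L) && (#|b| == k.+1)) /\
  (forall t : {set V}, 0 < k -> #|t| = k -> ~~ odd #|[set b in M | t \subset b]|).

(* OL: vertex set 'I_n * bool, (v, true) = v^+, (v, false) = v^-.
   A set of signed vertices is a simplex iff nonempty, the underlying vertices
   are distinct, and they span a simplex of L. *)
Definition pr n (S : {set 'I_n * bool}) : {set 'I_n} := [set x.1 | x in S].

Definition OL n (L : {set {set 'I_n}}) : {set {set 'I_n * bool}} :=
  [set S : {set 'I_n * bool} | [&& S != set0, #|pr S| == #|S| & pr S \in L]].

(* order on the vertices of OL: v_0^- < v_0^+ < v_1^- < ... ; rank *)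
Definition orank n (x : 'I_n * bool) : nat := (2 * x.1 + x.2)%N.

(* sorted vertex lists (as ranks); w is regarded as w^-, of rank 2w *)
Definition sverts_O n (s : {set 'I_n * bool}) : seq nat :=
  sort leq [seq orank x | x <- enum s].
Definition sverts_L n (b : {set 'I_n}) : seq nat :=
  sort leq [seq (2 * val w)%N | w <- enum b].

Definition mu (n k : nat) (sigma : {set 'I_n * bool}) (b : {set 'I_n}) : int :=
  let xs := sverts_O sigma in
  let ws := sverts_L b in
  if [&& size xs == k.+1, size ws == k.+1,
         [forall i : 'I_k.+1, nth 0 xs i <= nth 0 ws i]%N &
         [forall i : 'I_k, nth 0 ws i < nth 0 xs i.+1]%N]
  then 1 else 0.

Definition ODeltaM n (L : {set {set 'I_n}}) (k : nat) (Delta : {set 'I_n})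
  (M : {set {set 'I_n}}) : {set {set 'I_n * bool} * {set 'I_n}} :=
  [set c | [&& c.1 \in OL L, #|c.1| == k.+1, pr c.1 == Delta & c.2 \in M]].

(* Main.v *)
Require Import Defs.
From HB Require Import structures.
From mathcomp Require Import all_boot all_order all_algebra.
From mathcomp Require Import zify.
Import GRing.Theory.
Set Implicit Arguments. Unset Strict Implicit. Unset Printing Implicit Defensive.

Lemma dbl_inj n : injective (fun w : 'I_n => (2 * val w)%N).
Proof. by move=> a b /= /eqP; rewrite eqn_pmul2l // => /eqP /val_inj. Qed.

Lemma sL_memv n (b : {set 'I_n}) (v : 'I_n) : ((2 * val v)%N \in sverts_L b) = (v \in b).
Proof. by rewrite /sverts_L mem_sort (mem_map (@dbl_inj n)) mem_enum. Qed.

Lemma sL_mem n (b : {set 'I_n}) x : x \in sverts_L b -> exists2 v, v \in b & x = (2 * val v)%N.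
Proof. by rewrite /sverts_L mem_sort => /mapP [v]; rewrite mem_enum => hv ->; exists v. Qed.

Lemma sL_size n (b : {set 'I_n}) : size (sverts_L b) = #|b|.
Proof. by rewrite /sverts_L size_sort size_map -cardE. Qed.

Lemma sL_sorted n (b : {set 'I_n}) : sorted ltn (sverts_L b).
Proof.
rewrite ltn_sorted_uniq_leq sort_uniq sort_sorted ?andbT; last exact: leq_total.
by rewrite (map_inj_uniq (@dbl_inj n)) enum_uniq.
Qed.

Lemma sL_inj n (b b' : {set 'I_n}) : sverts_L b = sverts_L b' -> b = b'.
Proof. by move=> h; apply/setP => v; rewrite -!sL_memv h. Qed.

Definition idx n (Delta : {set 'I_n}) (v : 'I_n) : nat := index (2 * val v)%N (sverts_L Delta).

Lemma idx_lt n k (Delta : {set 'I_n}) v : #|Delta| = k.+1 -> v \in Delta -> idx Delta v < k.+1.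
Proof. by move=> hD hv; rewrite -hD -sL_size index_mem sL_memv. Qed.

Lemma idx_nth n (Delta : {set 'I_n}) v : v \in Delta -> nth 0 (sverts_L Delta) (idx Delta v) = (2 * val v)%N.
Proof. by move=> hv; rewrite nth_index // sL_memv. Qed.

Lemma idx_inj n (Delta : {set 'I_n}) v v' : v \in Delta -> v' \in Delta -> idx Delta v = idx Delta v' -> v = v'.
Proof. by move=> hv hv' e; apply: (@dbl_inj n); rewrite /= -(idx_nth hv) e idx_nth. Qed.

Lemma idx_surj n k (Delta : {set 'I_n}) i : #|Delta| = k.+1 -> i < k.+1 -> exists2 v, v \in Delta & idx Delta v = i.
Proof.
move=> hD hi; have hi' : i < size (sverts_L Delta) by rewrite sL_size hD.
have [v hv e] := sL_mem (mem_nth 0 hi'); exists v => //.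
rewrite /idx -e index_uniq //.
by have := sL_sorted Delta; rewrite ltn_sorted_uniq_leq => /andP [].
Qed.

Definition hmap n k (Delta : {set 'I_n}) (e : {ffun 'I_k.+1 -> bool}) : {set 'I_n * bool} :=
  [set (v, e (inord (idx Delta v))) | v in Delta].
Definition gmap n k (Delta : {set 'I_n}) (s : {set 'I_n * bool}) : {ffun 'I_k.+1 -> bool} :=
  [ffun i : 'I_k.+1 => [exists v in Delta, (idx Delta v == i) && ((v, true) \in s)]].
Definition Sset n (L : {set {set 'I_n}}) k (Delta : {set 'I_n}) :=
  [set s | [&& s \in OL L, #|s| == k.+1 & pr s == Delta]].

Lemma mem_hmap n k (Delta : {set 'I_n}) (e : {ffun 'I_k.+1 -> bool}) v b :
  ((v, b) \in hmap Delta e) = (v \in Delta) && (b == e (inord (idx Delta v))).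
Proof.
apply/imsetP/andP => [[w hw [-> ->]] //| [hv /eqP ->]]; by exists v.
Qed.

Lemma pr_hmap n k (Delta : {set 'I_n}) (e : {ffun 'I_k.+1 -> bool}) : pr (hmap Delta e) = Delta.
Proof.
rewrite /pr /hmap -imset_comp; apply/setP => v.
by apply/imsetP/idP => [[w hw ->] //| hv]; exists v.
Qed.

Lemma card_hmap n k (Delta : {set 'I_n}) (e : {ffun 'I_k.+1 -> bool}) : #|hmap Delta e| = #|Delta|.
Proof. by rewrite card_imset // => a b /(congr1 fst). Qed.

Lemma hmap_in n (L : {set {set 'I_n}}) k (Delta : {set 'I_n}) (e : {ffun 'I_k.+1 -> bool}) :
  #|Delta| = k.+1 -> Delta \in L -> hmap Delta e \in Sset L k Delta.
Proof.
move=> hD hL; rewrite !inE pr_hmap card_hmap hD hL !eqxx !andbT /=.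
by rewrite -card_gt0 card_hmap hD.
Qed.

Lemma gh n k (Delta : {set 'I_n}) (e : {ffun 'I_k.+1 -> bool}) :
  #|Delta| = k.+1 -> gmap k Delta (hmap Delta e) = e.
Proof.
move=> hD; apply/ffunP => i; rewrite ffunE.
apply/existsP/idP => [[w /and3P [hw /eqP hi]]| hi].
  by rewrite mem_hmap hw /= hi inord_val => /eqP <-.
have [v hv hvi] := idx_surj hD (ltn_ord i).
by exists v; rewrite hv hvi eqxx mem_hmap hv /= hvi inord_val hi.
Qed.

Lemma hg n (L : {set {set 'I_n}}) k (Delta : {set 'I_n}) s :
  #|Delta| = k.+1 -> s \in Sset L k Delta -> hmap Delta (gmap k Delta s) = s.
Proof.
move=> hD; rewrite !inE => /and3P [_ /eqP hs /eqP hp].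
apply/eqP; rewrite eqEcard card_hmap hD hs leqnn andbT.
apply/subsetP => -[v b]; rewrite mem_hmap => /andP [hv /eqP ->].
rewrite ffunE.
have -> : [exists w in Delta, (idx Delta w == (inord (idx Delta v) : 'I_k.+1) :> nat) && ((w, true) \in s)]
          = ((v, true) \in s).
  apply/existsP/idP => [[w /and3P [hw /eqP hi hws]]| hvs].
    rewrite inordK in hi; last exact: idx_lt.
    by rewrite -(idx_inj hw hv hi).
  by exists v; rewrite hv inordK ?eqxx ?hvs //; exact: idx_lt.
move: hv; rewrite -hp => /imsetP [[w c] hwc /= ->].
by case: c hwc => hwc; [rewrite hwc | case: (boolP ((w, true) \in s))].

Qed.

Lemma orank_inj n : injective (@orank n).
Proof.
move=> [v b] [v' b']; rewrite /orank /=.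
case: b; case: b' => /=.
- by move/addIn/(@dbl_inj n) => ->.
- by move/(congr1 odd); rewrite !oddD; case: (odd v); case: (odd v').
- by move/(congr1 odd); rewrite !oddD; case: (odd v); case: (odd v').
- by rewrite !addn0 => /(@dbl_inj n) ->.
Qed.

Definition Xs n k (Delta : {set 'I_n}) (e : {ffun 'I_k.+1 -> bool}) : seq nat :=
  mkseq (fun i => nth 0 (sverts_L Delta) i + e (inord i)) k.+1.

Lemma Xs_sorted n k (Delta : {set 'I_n}) (e : {ffun 'I_k.+1 -> bool}) :
  #|Delta| = k.+1 -> sorted ltn (Xs Delta e).
Proof.
move=> hD; apply/(sortedP 0) => i; rewrite size_mkseq => hi.
rewrite !nth_mkseq //; last exact: ltnW.
have hs : size (sverts_L Delta) = k.+1 by rewrite sL_size.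
have hlt : nth 0 (sverts_L Delta) i < nth 0 (sverts_L Delta) i.+1.
  apply: (sorted_ltn_nth ltn_trans 0 (sL_sorted Delta)) => //.
  1,2: by rewrite unfold_in /= hs ?(ltnW hi).
have hi1 : i < size (sverts_L Delta) by rewrite hs ltnW.
have hi2 : i.+1 < size (sverts_L Delta) by rewrite hs.
have [a _ ha] := sL_mem (mem_nth 0 hi1).
have [c _ hc] := sL_mem (mem_nth 0 hi2).
move: hlt; rewrite ha hc.
have := leq_b1 (e (inord i)); have := leq_b1 (e (inord i.+1)).
move: (e (inord i)) (e (inord i.+1)) => [] [] /=; lia.
Qed.

Lemma sO_hmap n k (Delta : {set 'I_n}) (e : {ffun 'I_k.+1 -> bool}) :
  #|Delta| = k.+1 -> sverts_O (hmap Delta e) = Xs Delta e.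
Proof.
move=> hD; have sX := Xs_sorted e hD.
have sXl : sorted leq (Xs Delta e) by move: sX; rewrite ltn_sorted_uniq_leq => /andP [].
have uX : uniq (Xs Delta e) by move: sX; rewrite ltn_sorted_uniq_leq => /andP [].
rewrite /sverts_O -(sorted_sort leq_trans sXl).
apply/perm_sortP; [exact: leq_total | exact: leq_trans | exact: anti_leq |].
apply: uniq_perm => //; first by rewrite (map_inj_uniq (@orank_inj n)) enum_uniq.
move=> x; apply/mapP/idP => [[[v b]]|].
  rewrite mem_enum mem_hmap => /andP [hv /eqP ->] ->.
  apply/mapP; exists (idx Delta v); first by rewrite mem_iota add0n idx_lt.
  by rewrite idx_nth.
rewrite /Xs /mkseq => /mapP [i]; rewrite mem_iota add0n => hi ->.
have [v hv hvi] := idx_surj hD hi.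
exists (v, e (inord i)); first by rewrite mem_enum mem_hmap hv hvi eqxx.
by rewrite /orank /= -hvi idx_nth.
Qed.

Definition Q n (Delta b : {set 'I_n}) (i : nat) (bt : bool) : bool :=
  (nth 0 (sverts_L Delta) i + bt <= nth 0 (sverts_L b) i) &&
  ((i == 0) || (nth 0 (sverts_L b) i.-1 < nth 0 (sverts_L Delta) i + bt)).

Lemma mu_hmap n k (Delta b : {set 'I_n}) (e : {ffun 'I_k.+1 -> bool}) :
  #|Delta| = k.+1 -> #|b| = k.+1 ->
  mu k (hmap Delta e) b = Posz (if [forall i : 'I_k.+1, Q Delta b i (e i)] then 1 else 0).
Proof.
move=> hD hb; rewrite /mu sO_hmap // size_mkseq sL_size hb !eqxx !andTb.
have hX : forall i : 'I_k.+1, nth 0 (Xs Delta e) i = nth 0 (sverts_L Delta) i + e i.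
  by move=> i; rewrite /Xs nth_mkseq // inord_val.
congr (Posz (if _ then _ else _)).
apply/andP/forallP => [[/forallP h1 /forallP h2] i| h].
  rewrite /Q -hX h1 /=; case: i => [[|j] hj] //=.
  have := h2 (Ordinal (hj : j < k)); rewrite /=.
  by [].
split; apply/forallP => i.
  by rewrite hX; have /andP [] := h i.
have hi : i.+1 < k.+1 by rewrite ltnS.
have /andP [_] := h (Ordinal hi); rewrite /=.
by rewrite -(hX (Ordinal hi)).
Qed.

Lemma D_lt n k (Delta : {set 'I_n}) j : #|Delta| = k.+1 -> j.+1 < k.+1 ->
  nth 0 (sverts_L Delta) j < nth 0 (sverts_L Delta) j.+1.
Proof.
move=> hD hj; have hs : size (sverts_L Delta) = k.+1 by rewrite sL_size.
apply: (sorted_ltn_nth ltn_trans 0 (sL_sorted Delta)) => //.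
by rewrite unfold_in /= hs ltnW.
by rewrite unfold_in /= hs.
Qed.

Lemma xor_eq a w : (a + true <= w) != (a + false <= w) -> w = a.
Proof. rewrite addn0 addn1; case: ltngtP => //. Qed.

Lemma all_xor n k (Delta b : {set 'I_n}) : #|Delta| = k.+1 -> #|b| = k.+1 ->
  (forall j, j < k.+1 -> Q Delta b j true != Q Delta b j false) -> b = Delta.
Proof.
move=> hD hb h; apply: sL_inj.
have hnth : forall j, j < k.+1 -> nth 0 (sverts_L b) j = nth 0 (sverts_L Delta) j.
  elim=> [|j IH] hj.
    by apply: xor_eq; have := h 0 hj; rewrite /Q /= ?orbT ?andbT.
  apply: xor_eq; have := h j.+1 hj; rewrite /Q /= IH ?(ltnW hj) //.
  have hl := D_lt hD hj.
  by rewrite (leq_trans hl (leq_addr _ _)) (leq_trans hl (leq_addr _ _)) !andbT.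
apply: (eq_from_nth (x0 := 0)); first by rewrite !sL_size hb hD.
by move=> i; rewrite sL_size hb => hi; rewrite hnth.
Qed.

Lemma prodQ n k (Delta b : {set 'I_n}) : #|Delta| = k.+1 -> #|b| = k.+1 ->
  (\prod_(i : 'I_k.+1) \sum_(bt : bool) ((Q Delta b i bt)%:R : 'Z_2))%R = ((b == Delta)%:R)%R.
Proof.
move=> hD hb; under eq_bigr do rewrite big_bool.
case: eqP => [-> | hne].
  rewrite big1 // => i _.
  have -> : Q Delta Delta i true = false by rewrite /Q addn1 ltnn.
  have -> : Q Delta Delta i false = true.
    rewrite /Q addn0 leqnn /=; case: i => [[|j] hj] //=.
    by rewrite (D_lt hD hj).
  by apply/val_inj.
case: (boolP [exists i : 'I_k.+1, Q Delta b i true == Q Delta b i false]) => [/existsP [i hi]| /existsPn hn].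
  rewrite (bigD1 i) //= (eqP hi).
  have -> : (((Q Delta b i false)%:R + (Q Delta b i false)%:R) : 'Z_2)%R = 0%R.
    by case: (Q Delta b i false); apply/val_inj.
  by rewrite GRing.mul0r.
exfalso; apply: hne; apply: (all_xor hD hb) => j hj.
by have := hn (Ordinal hj).
Qed.

Lemma prod_bool (I : finType) (P : I -> bool) :
  (\prod_(i : I) ((P i)%:R : 'Z_2))%R = ([forall i, P i]%:R)%R.
Proof.
case: (boolP [forall i, P i]) => [/forallP h | /forallPn [i hi]].
  by rewrite big1 // => i _; rewrite h.
by rewrite (bigD1 i) //= (negbTE hi) GRing.mul0r.
Qed.

Lemma inner n (L : {set {set 'I_n}}) k (Delta b : {set 'I_n}) :
  #|Delta| = k.+1 -> Delta \in L -> #|b| = k.+1 ->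
  (\sum_(s in Sset L k Delta) ((mu k s b)%:~R : 'Z_2))%R = ((b == Delta)%:R)%R.
Proof.
move=> hD hL hb.
have hbij : {on [pred s | s \in Sset L k Delta], bijective (@hmap n k Delta)}.
  exists (gmap k Delta) => [e _|s hs]; [exact: gh hD | exact: hg hD hs].
rewrite (reindex _ hbij) /=.
rewrite (eq_bigl xpredT); last by move=> e; rewrite hmap_in.
rewrite -(prodQ hD hb) bigA_distr_bigA /=.
apply: eq_bigr => e _; rewrite mu_hmap // prod_bool.
by case: ifP.
Qed.

Theorem lemma4p4 (n k : nat) (L M : {set {set 'I_n}}) (Delta : {set 'I_n})
  (hL : is_complex L) (hdim : has_dim L k) (hM : is_cycle2 L M k)
  (hDelta : Delta \in M) :
  (\sum_(c in ODeltaM L k Delta M) ((mu k c.1 c.2)%:~R : 'Z_2))%R = 1%R.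
Proof.
have [hM1 _] := hM.
have /andP [hDL /eqP hD] := hM1 _ hDelta.
rewrite (eq_bigl (fun c => (c.1 \in Sset L k Delta) && (c.2 \in M))); last first.
  by move=> [s b]; rewrite !inE /= !andbA.
rewrite -(pair_big_dep (fun s => s \in Sset L k Delta) (fun _ b => b \in M)
            (fun s b => ((mu k s b)%:~R : 'Z_2)%R)) /=.
rewrite exchange_big /=.
rewrite (eq_bigr (fun b => ((b == Delta)%:R : 'Z_2)%R)); last first.
  move=> b hb; have /andP [_ /eqP hbk] := hM1 _ hb.
  exact: inner.
rewrite (bigD1 Delta) //= eqxx big1 ?GRing.addr0 // => b /andP [_ /negbTE ->].
by [].
Qed.
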